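(* Let $\kappa\ge2$ and let $P$ be a tensor in $\mathrm{EE}_\kappa(\psi^+)$ for $\psi^+=((a,b),c)$. Then for all $k\in[\kappa]$ the $\kappa\times\kappa$ matrices $$Q^a_{\cdot\cdot k}=P_{+\cdot\cdot}\operatorname{Cof}(P_{\cdot+\cdot})^TP_{\cdot\cdot k}\quad\text{and}\quad Q^b_{\cdot\cdot k}=P_{\cdot\cdot k}\operatorname{Cof}(P_{+\cdot\cdot})P_{\cdot+\cdot}^T$$ are symmetric.
   Context: A $\kappa$-state site pattern probability tensor on a taxon set $X$, $|X|=n$, is an $n$-way $\kappa\times\cdots\times\kappa$ array with one index per taxon, non-negative entries summing to 1. For $Y\subseteq X$, $P_Y$ is the marginalization to $Y$; $\psi^+|_Y$ the induced rooted subtree; a 2-clade is a pair of leaves that are exactly the leaf descendants of some vertex. $\mathrm{UE}_\kappa(\psi^+)$ is the set of such tensors $P$ such that for every $Y\subseteq X$ and every 2-clade $\{x,y\}$ of $\psi^+|_Y$, $P_Y$ is invariant under exchanging the $x$ and $y$ indices. For an $n$-way tensor $P$ and a $\kappa\times\kappa$ matrix $M$, $P*_kM$ is the tensor whose entry at $(i_1,\dots,i_n)$ is the $i_k$-th entry of the row vector $vM$, where $v$ is the vector obtained from $P$ by fixing the $\ell$-th index to $i_\ell$ for all $\ell\neq k$; and $P*(M_1,\dots,M_n)=(\cdots((P*_1M_1)*_2M_2)\cdots)*_nM_n$. The extended exchangeable model $\mathrm{EE}_\kappa(\psi^+)$ is the set of $\kappa$-state site pattern probability tensors $P$ on $X$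 for which there exist non-singular $\kappa\times\kappa$ Markov matrices $M_1,\dots,M_n$ and a non-negative array $\tilde P\in\mathrm{UE}_\kappa(\psi^+)$ with $P*(M_1,\dots,M_n)=\tilde P$. For a 3-way tensor $P=(p_{ijk})$ with indices ordered $a,b,c$: $P_{+\cdot\cdot}$ is the $\kappa\times\kappa$ matrix with $(j,k)$-entry $\sum_i p_{ijk}$; $P_{\cdot+\cdot}$ has $(i,k)$-entry $\sum_j p_{ijk}$; $P_{\cdot\cdot+}$ has $(i,j)$-entry $\sum_kp_{ijk}$; $P_{\cdot\cdot k}$ is the slice with $(i,j)$-entry $p_{ijk}$. $A^T$ is the transpose and $\operatorname{Cof}(A)$ is the matrix of cofactors of a square matrix $A$ (so $\operatorname{Cof}(A)^T$ is the adjugate of $A$). *)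

(* Defs.v *)
From mathcomp Require Import all_boot all_order all_algebra.
Set Implicit Arguments. Unset Strict Implicit. Unset Printing Implicit Defensive.
Import Order.TTheory GRing.Theory Num.Theory.
Local Open Scope ring_scope.

(* A 3-way kappa x kappa x kappa array; indices ordered a, b, c. *)
Definition tensor3 (R : Type) (k : nat) := 'I_k -> 'I_k -> 'I_k -> R.

Section Defs.
Variables (R : realFieldType) (k : nat).

Definition is_sp_tensor (P : tensor3 R k) : Prop :=
  (forall i j l, 0 <= P i j l) /\ \sum_i \sum_j \sum_l P i j l = 1.

Definition markov (M : 'M[R]_k) : Prop :=
  (forall i j, 0 <= M i j) /\ (forall i, \sum_j M i j = 1).

(* P *_t M : entry (i1,i2,i3) is the i_t-th entry of v M, v the fibre. *)
Definition tmul1 (P : tensor3 R k) (M : 'M[R]_k) : tensor3 R k :=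
  fun i j l => \sum_m P m j l * M m i.
Definition tmul2 (P : tensor3 R k) (M : 'M[R]_k) : tensor3 R k :=
  fun i j l => \sum_m P i m l * M m j.
Definition tmul3 (P : tensor3 R k) (M : 'M[R]_k) : tensor3 R k :=
  fun i j l => \sum_m P i j m * M m l.
Definition tmul (P : tensor3 R k) (M1 M2 M3 : 'M[R]_k) : tensor3 R k :=
  tmul3 (tmul2 (tmul1 P M1) M2) M3.

Definition margA (P : tensor3 R k) : 'M[R]_k :=
  \matrix_(j, l) \sum_i P i j l.
Definition margB (P : tensor3 R k) : 'M[R]_k :=
  \matrix_(i, l) \sum_j P i j l.
Definition margC (P : tensor3 R k) : 'M[R]_k :=
  \matrix_(i, j) \sum_l P i j l.
Definition slice3 (P : tensor3 R k) (l : 'I_k) : 'M[R]_k :=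
  \matrix_(i, j) P i j l.

(* Matrix of cofactors (so (Cof A)^T = \adj A). *)
Definition Cof (A : 'M[R]_k) : 'M[R]_k := \matrix_(i, j) cofactor A i j.

(* UE_kappa(((a,b),c)): for every Y subset of {a,b,c} and every 2-clade
   {x,y} of the induced rooted subtree, P_Y is invariant under swapping x,y.
   Y = {a,b,c}: 2-clade {a,b};  Y = {a,b}: {a,b};  Y = {a,c}: {a,c};
   Y = {b,c}: {b,c};  |Y| <= 1: no 2-clades. *)
Definition UE_abc (P : tensor3 R k) : Prop :=
  is_sp_tensor P /\
  (forall i j l, P i j l = P j i l) /\
  (forall i j, margC P i j = margC P j i) /\
  (forall i l, margB P i l = margB P l i) /\
  (forall j l, margA P j l = margA P l j).

Definition EE_abc (P : tensor3 R k) : Prop :=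
  is_sp_tensor P /\
  exists M1 M2 M3 : 'M[R]_k,
    [/\ markov M1, markov M2 & markov M3] /\
    [/\ M1 \in unitmx, M2 \in unitmx & M3 \in unitmx] /\
    exists Pt : tensor3 R k,
      (forall i j l, 0 <= Pt i j l) /\ UE_abc Pt /\
      (forall i j l, tmul P M1 M2 M3 i j l = Pt i j l).

End Defs.

(* Main.v *)
Require Import Defs.
From mathcomp Require Import all_boot all_order all_algebra.
Import Order.TTheory GRing.Theory Num.Theory.
Local Open Scope ring_scope.

Lemma tmulE (R : realFieldType) (k : nat) (P : tensor3 R k) (M1 M2 M3 : 'M[R]_k) i j l :
  tmul P M1 M2 M3 i j l = \sum_o M3 o l * (M1^T *m slice3 P o *m M2) i j.
Proof.
rewrite /tmul/tmul3/tmul2/tmul1; apply eq_bigr => o _; rewrite mulrC; congr (_ * _).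
rewrite mxE; apply eq_bigr => n _; rewrite mxE; congr (_ * _).
apply eq_bigr => m _; rewrite !mxE mulrC //.
Qed.

Lemma key1 (R : realFieldType) (k : nat) (P : tensor3 R k) (M1 M2 M3 : 'M[R]_k) j l :
  (forall i, \sum_j M1 i j = 1) ->
  \sum_i tmul P M1 M2 M3 i j l = (M2^T *m margA P *m M3) j l.
Proof.
move=> h1; rewrite mxE; under eq_bigr do rewrite tmulE.
rewrite exchange_big; apply eq_bigr => o _; rewrite -mulr_sumr mulrC; congr (_ * _).
rewrite mxE.
under eq_bigr do rewrite mxE.
rewrite exchange_big; apply eq_bigr => n _; rewrite -mulr_suml mulrC !mxE; congr (_ * _).
under eq_bigr do rewrite mxE.
rewrite exchange_big; apply eq_bigr => m _; rewrite -mulr_suml; under eq_bigr do rewrite mxE; rewrite h1 mul1r mxE //.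
Qed.

Lemma key2 (R : realFieldType) (k : nat) (P : tensor3 R k) (M1 M2 M3 : 'M[R]_k) i l :
  (forall i, \sum_j M2 i j = 1) ->
  \sum_j tmul P M1 M2 M3 i j l = (M1^T *m margB P *m M3) i l.
Proof.
move=> h2; rewrite mxE; under eq_bigr do rewrite tmulE.
rewrite exchange_big; apply eq_bigr => o _; rewrite -mulr_sumr mulrC; congr (_ * _).
rewrite mxE.
under eq_bigr do rewrite mxE.
rewrite exchange_big /=.
under eq_bigr do rewrite -mulr_sumr h2 mulr1.
under eq_bigr do rewrite mxE.
under [RHS]eq_bigr do rewrite !mxE mulr_sumr.
rewrite [RHS]exchange_big /=; apply eq_bigr => n _; apply eq_bigr => m _; rewrite !mxE //.
Qed.

Lemma hCof (R : realFieldType) (k : nat) (X : 'M[R]_k) : (Cof X)^T = \adj X.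
Proof. by apply/matrixP => i j; rewrite !mxE. Qed.

Theorem proposition6p1 (R : realFieldType) (k : nat) (hk : (2 <= k)%N)
  (P : tensor3 R k) (hP : EE_abc P) :
  forall l : 'I_k,
    let Qa := margA P *m (Cof (margB P))^T *m slice3 P l in
    let Qb := slice3 P l *m Cof (margA P) *m (margB P)^T in
    Qa^T = Qa /\ Qb^T = Qb.
Proof.
case: hP => _ [M1 [M2 [M3 [[[_ h1] [_ h2] [_ h3]] [[u1 u2 u3] [Pt [_ [[_ [hsym _]] hPt]]]]]]]].
set U := fun o => M1^T *m slice3 P o *m M2.
have E0 : M2^T *m margA P *m M3 = M1^T *m margB P *m M3.
  apply/matrixP => j l; rewrite -(@key1 _ _ P M1 M2 M3) // -(@key2 _ _ P M1 M2 M3) //; apply eq_bigr => i _.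
  by rewrite !hPt hsym.
have E1 : M2^T *m margA P = M1^T *m margB P.
  by have := congr1 (mulmx^~ (invmx M3)) E0; rewrite !mulmxK.
have Usym : forall o, (U o)^T = U o.
  move=> o; apply/matrixP => i j; rewrite mxE.
  have r : forall a b, (\row_o0 U o0 a b) *m M3 = \row_l Pt a b l.
    move=> a b; apply/rowP => l; rewrite !mxE -hPt tmulE.
    by apply eq_bigr => o0 _; rewrite mxE mulrC.
  have : (\row_o0 U o0 j i) *m M3 = (\row_o0 U o0 i j) *m M3.
    by rewrite !r; apply/rowP => l; rewrite !mxE hsym.
  move/(congr1 (mulmx^~ (invmx M3))); rewrite !mulmxK // => /rowP /(_ o).
  by rewrite !mxE.
have u1t : M1^T \in unitmx by rewrite unitmx_tr.
have u2t : M2^T \in unitmx by rewrite unitmx_tr.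
have SU : forall l, M1^T *m slice3 P l = U l *m invmx M2.
  by move=> l; rewrite /U mulmxK.
have SU' : forall l, slice3 P l *m M2 = invmx M1^T *m U l.
  by move=> l; rewrite /U -mulmxA mulKmx.
move=> l Qa Qb.
set N2 := invmx M2. set N1 := invmx M1.
have hA : margA P = invmx M2^T *m (M1^T *m margB P).
  by rewrite -E1 mulKmx.
have hB : margB P = invmx M1^T *m (M2^T *m margA P).
  by rewrite E1 mulKmx.
have hQa : Qa = \det (margB P) *: (N2^T *m U l *m N2).
  rewrite /Qa hCof {1}hA -!mulmxA (mulmxA (margB P)) mul_mx_adj mul_scalar_mx.
  by rewrite -!scalemxAr /N2 mulmxV // mulmx1 trmx_inv.
have hQb : Qb = \det (margA P) *: (N1^T *m U l *m N1).
  rewrite /Qb -[Cof _]trmxK hCof -mulmxA -trmx_mul hB -!mulmxA mul_mx_adj.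
  rewrite mul_mx_scalar -!scalemxAr linearZ /= !trmx_mul trmxK -scalemxAr trmx_inv trmxK.
  by congr (_ *: _); rewrite /N1 !mulmxA -trmx_mul mulmxV // trmx1 mul1mx.
split.
  by rewrite hQa linearZ /= trmx_mul trmx_mul trmxK Usym mulmxA.
by rewrite hQb linearZ /= trmx_mul trmx_mul trmxK Usym mulmxA.
Qed.
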